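(* Let $A$ be a formula of $\mathbf{L_1}$. If some normal tableau for $A$ is closed, then no normal tableau for $A$ has a branch ending with a Hintikka formula; in particular every completed normal tableau for $A$ is closed.
   Context: Formulas of $\mathbf{L_1}$: built from atomic formulas $\epsilon ab$ ($a,b$ name variables, possibly equal) with connectives $\vee,\sim$. Disjunctions may be associated in any way. Positive/negative parts (occurrences): $A$ is a positive part of $A$; if $B\vee C$ is a positive part then $B,C$ are positive parts; if $\sim B$ is a positive part then $B$ is a negative part; if $\sim B$ is a negative part then $B$ is a positive part. $F[B_+]$ ($G[B_-]$) denotes a formula with a specified occurrence of $B$ as positive (negative) part; $F[B_+,C_-]$ etc. denote specified non-overlapping occurrences. Tableaux: reduction rules ($\vee_-$) $G[B\vee C_-]$ $\mapsto$ two branches $G[B\vee C_-]\vee\sim B$, $G[B\vee C_-]\vee\sim C$; ($\epsilon_1$) $G[\epsilon ab_-]\mapsto G[\epsilon ab_-]\vee\sim\epsilon aa$; ($\epsilon_2$) $G[\epsilon ab_-,\epsilon bc_-]\mapsto G[\epsilon ab_-,\epsilon bc_-]\vee\sim\epsilon ac$; ($\epsilon_{3b}$) $G[\epsilon ab_-,\epsilon bb_-]\mapsto G[\epsilon ab_-,\epsilon bb_-]\vee\sim\epsilon ba$. A tableau for $A$ is a finite tree with root $A$ whose non-leaf nodes have as children the result of applying one rule. A branch is closed if its last formula has the form $F[B_+,B_-]$; a tableau is closed if all branches are. A tableau is normal if each rule application is made only to a formula not of the form $F[B_+,B_-]$ and only when the formula appended after $\sim$ (i.e. $B$, $C$, $\epsilon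 aa$, $\epsilon ac$ or $\epsilon ba$ respectively) does not already occur as a negative part of the formula being reduced. A normal tableau is completed if no further normal rule application is possible at the end of any branch. Hintikka formula: a formula $H$ such that (1) $H$ is not of the form $F[B_+,B_-]$; (2) if $B\vee C$ is a negative part of $H$ then $B$ or $C$ is; (3) if $\epsilon ab$ is a negative part then so is $\epsilon aa$; (4) if $\epsilon ab,\epsilon bc$ are negative parts then so is $\epsilon ac$; (5) if $\epsilon ab,\epsilon bb$ are negative parts then so is $\epsilon ba$. *)

(* Defs.v *)
From Stdlib Require Import List.
Import ListNotations.

(** Formulas of L1; name variables are natural numbers. *)
Inductive formula : Type :=
| Eps : nat -> nat -> formula
| Or  : formula -> formula -> formula
| Neg : formula -> formula.

(** Positions (occurrences) of subformulas: paths from the root. *)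
Inductive dir : Type := DL | DR | DN.
Definition position := list dir.

(** [part s0 A p s X]: in formula A, taken itself with polarity s0
    (true = positive, false = negative), the occurrence at position p is the
    formula X and it is a part of polarity s.  Following the definition:
    A is a positive part of A; the disjuncts of a POSITIVE disjunction are
    positive parts; the argument of a negation has the opposite polarity. *)
Inductive part : bool -> formula -> position -> bool -> formula -> Prop :=
| part_here : forall s A, part s A [] s A
| part_orl : forall B C p s X, part true B p s X -> part true (Or B C) (DL :: p) s X
| part_orr : forall B C p s X, part true C p s X -> part true (Or B C) (DR :: p) s X
| part_neg : forall s0 B p s X, part (negb s0) B p s X -> part s0 (Neg B) (DN :: p) s X.

Definition pos_part_at (F : formula) (p : position) (X : formula) : Prop :=
  part true F p true X.
Definition neg_part_at (F : formula) (p : position) (X : formula) : Prop :=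
  part true F p false X.

Definition neg_part (F X : formula) : Prop := exists p, neg_part_at F p X.

Definition prefix (p q : position) : Prop := exists r, q = p ++ r.
Definition nonoverlap (p q : position) : Prop := ~ prefix p q /\ ~ prefix q p.

Definition closed_form (F : formula) : Prop :=
  exists B p q, nonoverlap p q /\ pos_part_at F p B /\ neg_part_at F q B.

(** Normal applications of the one-branch rules (eps1), (eps2), (eps3b):
    [nstep1 G G'] means G' results from G by a normal application. *)
Definition nstep1 (G G' : formula) : Prop :=
  ~ closed_form G /\
  (
    (exists a b, neg_part G (Eps a b) /\ ~ neg_part G (Eps a a) /\
                 G' = Or G (Neg (Eps a a)))
    \/
    (exists a b c p q, nonoverlap p q /\ neg_part_at G p (Eps a b) /\
                 neg_part_at G q (Eps b c) /\ ~ neg_part G (Eps a c) /\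
                 G' = Or G (Neg (Eps a c)))
    \/
    (exists a b p q, nonoverlap p q /\ neg_part_at G p (Eps a b) /\
                 neg_part_at G q (Eps b b) /\ ~ neg_part G (Eps b a) /\
                 G' = Or G (Neg (Eps b a)))).

Definition nstep2 (G G1 G2 : formula) : Prop :=
  ~ closed_form G /\
  exists B C, neg_part G (Or B C) /\ ~ neg_part G B /\ ~ neg_part G C /\
              G1 = Or G (Neg B) /\ G2 = Or G (Neg C).

Inductive tab : Type :=
| Leaf : formula -> tab
| Un   : formula -> tab -> tab
| Bin  : formula -> tab -> tab -> tab.

Definition root (t : tab) : formula :=
  match t with Leaf F => F | Un F _ => F | Bin F _ _ => F end.

Fixpoint normal_tab (t : tab) : Prop :=
  match t with
  | Leaf _ => True
  | Un F t1 => nstep1 F (root t1) /\ normal_tab t1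
  | Bin F t1 t2 => nstep2 F (root t1) (root t2) /\ normal_tab t1 /\ normal_tab t2
  end.

Definition normal_tableau_for (A : formula) (t : tab) : Prop :=
  root t = A /\ normal_tab t.

Fixpoint leaves (t : tab) : list formula :=
  match t with
  | Leaf F => [F]
  | Un _ t1 => leaves t1
  | Bin _ t1 t2 => leaves t1 ++ leaves t2
  end.

Definition closed_tab (t : tab) : Prop :=
  forall F, In F (leaves t) -> closed_form F.

Definition completed (t : tab) : Prop :=
  forall F, In F (leaves t) ->
    (~ exists G', nstep1 F G') /\ (~ exists G1 G2, nstep2 F G1 G2).

Definition hintikka (H : formula) : Prop :=
  ~ closed_form H /\
  (forall B C, neg_part H (Or B C) -> neg_part H B \/ neg_part H C) /\
  (forall a b, neg_part H (Eps a b) -> neg_part H (Eps a a)) /\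
  (forall a b c, neg_part H (Eps a b) -> neg_part H (Eps b c) -> neg_part H (Eps a c)) /\
  (forall a b, neg_part H (Eps a b) -> neg_part H (Eps b b) -> neg_part H (Eps b a)).

(* Main.v *)
Require Import Defs.
From Stdlib Require Import List Classical Lia.
Import ListNotations.

Fixpoint ev (v : nat -> nat -> Prop) (F : formula) : Prop :=
  match F with
  | Eps a b => v a b
  | Or B C => ev v B \/ ev v C
  | Neg B => ~ ev v B
  end.

Fixpoint fsize (F : formula) : nat :=
  match F with
  | Eps _ _ => 1
  | Or B C => S (fsize B + fsize C)
  | Neg B => S (fsize B)
  end.

Definition good (v : nat -> nat -> Prop) : Prop :=
  (forall a b, v a b -> v a a) /\ (forall a b c, v a b -> v b c -> v a c) /\
  (forall a b, v a b -> v b b -> v b a).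

Lemma part_true v s0 A p s X : part s0 A p s X ->
  (if s then ev v X else ~ ev v X) -> (if s0 then ev v A else ~ ev v A).
Proof.
  intro Hp; induction Hp; simpl; intro H0.
  - exact H0.
  - left; apply IHHp; auto.
  - right; apply IHHp; auto.
  - specialize (IHHp H0); destruct s0; simpl in *; tauto.
Qed.

Lemma neg_false v F X : neg_part F X -> ~ ev v X -> ev v F.
Proof. intros [p Hp] H; exact (part_true v _ _ _ _ _ Hp H). Qed.

Lemma closed_valid v F : closed_form F -> ev v F.
Proof.
  intros [B [p [q [_ [Hp Hq]]]]].
  destruct (classic (ev v B)) as [H|H].
  - exact (part_true v _ _ _ _ _ Hp H).
  - exact (part_true v _ _ _ _ _ Hq H).
Qed.

Lemma tab_valid t : normal_tab t -> closed_tab t -> forall v, good v -> ev v (root t).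
Proof.
  induction t as [F|F t1 IH|F t1 IH1 t2 IH2]; simpl; intros Hn Hc v Hg.
  - apply closed_valid, Hc; simpl; auto.
  - destruct Hn as [[_ Hs] Hn].
    assert (Hr : ev v (root t1)) by (apply IH; auto).
    destruct (classic (ev v F)) as [HF|HF]; auto. exfalso.
    destruct Hg as [g1 [g2 g3]].
    destruct Hs as [[a [b [H1 [_ E]]]]|[[a [b [c [p [q [_ [Hp [Hq [_ E]]]]]]]]]|[a [b [p [q [_ [Hp [Hq [_ E]]]]]]]]]];
      rewrite E in Hr; simpl in Hr; destruct Hr as [Hr|Hr]; try contradiction.
    + apply Hr, (g1 a b). apply NNPP; intro N; apply HF; exact (neg_false v _ _ H1 N).
    + apply Hr, (g2 a b c).
      * apply NNPP; intro N; apply HF; exact (part_true v _ _ _ _ _ Hp N).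
      * apply NNPP; intro N; apply HF; exact (part_true v _ _ _ _ _ Hq N).
    + apply Hr, (g3 a b).
      * apply NNPP; intro N; apply HF; exact (part_true v _ _ _ _ _ Hp N).
      * apply NNPP; intro N; apply HF; exact (part_true v _ _ _ _ _ Hq N).
  - destruct Hn as [[_ [B [C [H1 [_ [_ [E1 E2]]]]]]] [Hn1 Hn2]].
    assert (Hr1 : ev v (root t1)) by (apply IH1; auto; intros G HG; apply Hc, in_or_app; auto).
    assert (Hr2 : ev v (root t2)) by (apply IH2; auto; intros G HG; apply Hc, in_or_app; auto).
    destruct (classic (ev v F)) as [HF|HF]; auto. exfalso.
    rewrite E1 in Hr1; rewrite E2 in Hr2; simpl in *.
    destruct Hr1 as [Hr1|Hr1]; try contradiction.
    destruct Hr2 as [Hr2|Hr2]; try contradiction.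
    apply HF. apply (neg_false v _ _ H1). simpl; tauto.
Qed.

Lemma leaf_false t v H : normal_tab t -> In H (leaves t) -> ~ ev v H -> ~ ev v (root t).
Proof.
  induction t as [F|F t1 IH|F t1 IH1 t2 IH2]; simpl; intros Hn Hi HH.
  - destruct Hi as [<-|[]]; auto.
  - destruct Hn as [[_ Hs] Hn].
    assert (Hr : ~ ev v (root t1)) by auto.
    destruct Hs as [[a [b [_ [_ E]]]]|[[a [b [c [p [q [_ [_ [_ [_ E]]]]]]]]]|[a [b [p [q [_ [_ [_ [_ E]]]]]]]]]];
      rewrite E in Hr; simpl in Hr; tauto.
  - destruct Hn as [[_ [B [C [_ [_ [_ [E1 E2]]]]]]] [Hn1 Hn2]].
    apply in_app_or in Hi; destruct Hi as [Hi|Hi].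
    + assert (Hr : ~ ev v (root t1)) by auto. rewrite E1 in Hr; simpl in Hr; tauto.
    + assert (Hr : ~ ev v (root t2)) by auto. rewrite E2 in Hr; simpl in Hr; tauto.
Qed.

Lemma part_comp s0 A p s X : part s0 A p s X ->
  forall r s' Y, part s X r s' Y -> part s0 A (p ++ r) s' Y.
Proof.
  intro Hp; induction Hp; simpl; intros; auto; constructor; auto.
Qed.

Lemma part_decomp p : forall s0 A r s' Y s X,
  part s0 A (p ++ r) s' Y -> part s0 A p s X -> part s X r s' Y.
Proof.
  induction p as [|d p IH]; simpl; intros s0 A r s' Y s X H1 H2.
  - inversion H2; subst; auto.
  - inversion H2; subst; inversion H1; subst; eauto.
Qed.

Lemma part_size s X r s' Y : part s X r s' Y -> fsize Y + length r <= fsize X.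
Proof. intro Hp; induction Hp; simpl; lia. Qed.

Lemma same_pol s0 A p q s s' X :
  part s0 A p s X -> part s0 A q s' X -> prefix p q -> s = s'.
Proof.
  intros H1 H2 [r E]; subst q.
  pose proof (part_decomp _ _ _ _ _ _ _ _ H2 H1) as H.
  destruct r.
  - inversion H; auto.
  - apply part_size in H; simpl in H; lia.
Qed.

Lemma not_closed_disj H p q X :
  ~ closed_form H -> pos_part_at H p X -> neg_part_at H q X -> False.
Proof.
  intros Hc Hp Hq. apply Hc. exists X, p, q. repeat split; auto.
  - intro P. pose proof (same_pol _ _ _ _ _ _ _ Hp Hq P). discriminate.
  - intro P. pose proof (same_pol _ _ _ _ _ _ _ Hq Hp P). discriminate.
Qed.

Lemma hint_eval H : hintikka H ->
  forall X p s, part true H p s X ->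
    (if s then ~ ev (fun a b => neg_part H (Eps a b)) X
     else ev (fun a b => neg_part H (Eps a b)) X).
Proof.
  intros Hh. destruct Hh as [Hc [h2 _]].
  induction X as [a b|B IHB C IHC|B IHB]; intros p s Hp; destruct s; simpl.
  - intros [q Hq]. exact (not_closed_disj _ _ _ _ Hc Hp Hq).
  - exists p; auto.
  - intros [HB|HC].
    + apply (IHB (p ++ [DL]) true); auto.
      apply (part_comp _ _ _ _ _ Hp). constructor. constructor.
    + apply (IHC (p ++ [DR]) true); auto.
      apply (part_comp _ _ _ _ _ Hp). constructor. constructor.
  - destruct (h2 B C (ex_intro _ p Hp)) as [[q Hq]|[q Hq]].
    + left; exact (IHB q false Hq).
    + right; exact (IHC q false Hq).
  - intro N; apply N.
    apply (IHB (p ++ [DN]) false).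
    apply (part_comp _ _ _ _ _ Hp). constructor. constructor.
  - apply (IHB (p ++ [DN]) true).
    apply (part_comp _ _ _ _ _ Hp). constructor. constructor.
Qed.

Lemma hint_good H : hintikka H -> good (fun a b => neg_part H (Eps a b)).
Proof. intros [_ [_ [h3 [h4 h5]]]]. repeat split; eauto. Qed.

Lemma overlap_atoms H p q a b c d :
  neg_part_at H p (Eps a b) -> neg_part_at H q (Eps c d) -> ~ nonoverlap p q ->
  a = c /\ b = d.
Proof.
  intros Hp Hq Hn.
  assert (prefix p q \/ prefix q p) as [[r E]|[r E]].
  { unfold nonoverlap in Hn. destruct (classic (prefix p q)); auto.
    destruct (classic (prefix q p)); auto. tauto. }
  - subst q. pose proof (part_decomp _ _ _ _ _ _ _ _ Hq Hp) as K.
    inversion K; subst; auto.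
  - subst p. pose proof (part_decomp _ _ _ _ _ _ _ _ Hp Hq) as K.
    inversion K; subst; auto.
Qed.

Theorem theorem6p6 (A : formula) :
  (exists t, normal_tableau_for A t /\ closed_tab t) ->
  (forall t, normal_tableau_for A t -> forall H, In H (leaves t) -> ~ hintikka H) /\
  (forall t, normal_tableau_for A t -> completed t -> closed_tab t).
Proof.
  intros [t0 [[R0 N0] C0]].
  assert (P1 : forall t, normal_tableau_for A t -> forall H, In H (leaves t) -> ~ hintikka H).
  { intros t [Rt Nt] H Hi Hh.
    pose proof (tab_valid t0 N0 C0 _ (hint_good H Hh)) as V.
    pose proof (hint_eval H Hh H [] true (part_here _ _)) as F; simpl in F.
    apply (leaf_false t _ H Nt Hi F). rewrite Rt, <- R0. exact V. }
  split; auto.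
  intros t Ht Hcomp F Hi.
  apply NNPP; intro Hc.
  destruct (Hcomp F Hi) as [N1 N2].
  apply (P1 t Ht F Hi).
  split; [exact Hc|].
  split; [|split; [|split]].
  - intros B C HBC. apply NNPP; intro K. apply N2.
    exists (Or F (Neg B)), (Or F (Neg C)). split; auto.
    exists B, C. repeat split; auto; intro; apply K; auto.
  - intros a b Hab. apply NNPP; intro K. apply N1.
    eexists. split; auto. left. exists a, b. eauto.
  - intros a b c [p Hp] [q Hq]. apply NNPP; intro K.
    destruct (classic (nonoverlap p q)) as [No|No].
    + apply N1. eexists. split; auto. right; left.
      exists a, b, c, p, q. split; [exact No|]. split; [exact Hp|]. split; [exact Hq|]. split; [exact K|reflexivity].
    + destruct (overlap_atoms _ _ _ _ _ _ _ Hp Hq No); subst.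
      apply K; exists p; auto.
  - intros a b [p Hp] [q Hq]. apply NNPP; intro K.
    destruct (classic (nonoverlap p q)) as [No|No].
    + apply N1. eexists. split; auto. right; right.
      exists a, b, p, q. split; [exact No|]. split; [exact Hp|]. split; [exact Hq|]. split; [exact K|reflexivity].
    + destruct (overlap_atoms _ _ _ _ _ _ _ Hp Hq No); subst.
      apply K; exists p; auto.
Qed.
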